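(* Let $d\ge 2$ and consider the $(2,d)$ random access code task: Alice receives $x=x_1x_2$ with $x_1,x_2\in\{1,\dots,d\}$ uniformly at random ($N=d^2$ inputs); Bob receives $y\in\{1,2\}$ uniformly at random and outputs $z\in\{1,\dots,d\}$; the success metric is $\mathcal{S}=\frac{1}{2d^2}\sum_{x,y}p(z=x_y|x,y)$. Let $\mathcal{S}^*=\frac12\left(1+\frac{1}{\sqrt d}\right)$. There exists a quantum protocol (Alice sends states $\rho_x$, Bob performs measurements $\{M_{z|y}\}_z$, $p(z|x,y)=\operatorname{tr}(\rho_x M_{z|y})$) achieving $\mathcal{S}=\mathcal{S}^*$ whose distinguishability $\mathcal{D}_Q$ satisfies the following: every classical protocol achieving success metric at least $\mathcal{S}^*$ has distinguishability $\mathcal{D}_C$ with $\mathcal{D}_C/\mathcal{D}_Q\ge\sqrt d$. (In particular, $\mathcal{D}_Q\le 1/d$ and every such classical protocol has $\mathcal{D}_C\ge 1/\sqrt d$.)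
   Context: Quantum distinguishability: $\mathcal{D}_Q=\max_{\{M_x\}}\frac1N\sum_x\operatorname{tr}(\rho_xM_x)$ over POVMs $\{M_x\}_{x}$ ($M_x\ge0$, $\sum_xM_x=\mathbb 1$), with the Hilbert space dimension unconstrained. A classical protocol consists of an encoding $p_e(m|x)$ over messages $m$ from a finite set of arbitrary size and a decoding $p_d(z|y,m)$, giving $p(z|x,y)=\sum_m p_e(m|x)p_d(z|y,m)$; its distinguishability is $\mathcal{D}_C=\frac1N\sum_m\max_x p_e(m|x)$. *)

(* Defs.v *)
From HB Require Import structures.
From mathcomp Require Import all_boot all_order all_algebra.
From mathcomp Require Import complex.
From mathcomp Require Import reals.
Set Implicit Arguments. Unset Strict Implicit. Unset Printing Implicit Defensive.
Import Order.TTheory GRing.Theory Num.Theory.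
Local Open Scope ring_scope.

Section QRAC.
Variable R : realType.
Local Notation C := (R[i]).

Definition adjmx n (A : 'M[C]_n) : 'M[C]_n := (map_mx Num.conj A)^T.

Definition psd n (A : 'M[C]_n) : Prop :=
  adjmx A = A /\ forall v : 'cV[C]_n, 0 <= ((map_mx Num.conj v)^T *m A *m v) ord0 ord0.

Definition density n (rho : 'M[C]_n) : Prop := psd rho /\ \tr rho = 1.

Definition povm n (I : finType) (M : I -> 'M[C]_n) : Prop :=
  (forall i, psd (M i)) /\ \sum_(i : I) M i = 1%:M.

Definition born n (rho M : 'M[C]_n) : R := complex.Re (\tr (rho *m M)).

(* inputs of the (2,d) RAC: x = x_1 x_2 with x_y in {1..d} (here 'I_d) *)
Definition racX (d : nat) := {ffun 'I_2 -> 'I_d}.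

Definition DQ_val n (X : finType) (rho : X -> 'M[C]_n) (M : X -> 'M[C]_n) : R :=
  (#|X|%:R)^-1 * \sum_(x : X) born (rho x) (M x).

Definition is_DQ n (X : finType) (rho : X -> 'M[C]_n) (D : R) : Prop :=
  (exists M : X -> 'M[C]_n, povm M /\ DQ_val rho M = D) /\
  (forall M : X -> 'M[C]_n, povm M -> DQ_val rho M <= D).

Definition rac_success d (p : racX d -> 'I_2 -> 'I_d -> R) : R :=
  ((2 * d ^ 2)%N%:R)^-1 * \sum_(x : racX d) \sum_(y : 'I_2) p x y (x y).

Definition qprob d n (rho : racX d -> 'M[C]_n) (M : 'I_2 -> 'I_d -> 'M[C]_n)
  : racX d -> 'I_2 -> 'I_d -> R :=
  fun x y z => born (rho x) (M y z).

(* classical protocols: encoding p_e(m|x), decoding p_d(z|y,m) *)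
Definition stochastic (A B : finType) (p : A -> B -> R) : Prop :=
  (forall a b, 0 <= p a b) /\ (forall a, \sum_(b : B) p a b = 1).

Definition cprob d (Msg : finType) (pe : racX d -> Msg -> R)
  (pd : 'I_2 -> Msg -> 'I_d -> R) : racX d -> 'I_2 -> 'I_d -> R :=
  fun x y z => \sum_(m : Msg) pe x m * pd y m z.

Definition DC d (Msg : finType) (pe : racX d -> Msg -> R) : R :=
  ((d ^ 2)%N%:R)^-1 * \sum_(m : Msg) \big[Num.max/0]_(x : racX d) pe x m.

End QRAC.

Definition Sstar (R : realType) (d : nat) : R := 2^-1 * (1 + (Num.sqrt (d%:R : R))^-1).

(* Main.v *)
Require Import Defs.
From HB Require Import structures.
From mathcomp Require Import all_boot all_order all_algebra all_fingroup all_solvable.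
From mathcomp Require Import separable cyclotomic.
From mathcomp Require Import complex reals.
From mathcomp Require Import ring lra.
Set Implicit Arguments. Unset Strict Implicit. Unset Printing Implicit Defensive.
Import Order.TTheory GRing.Theory Num.Theory.
Local Open Scope ring_scope.

Lemma prim_ex (R : realType) n : (n > 0)%N -> exists z : R[i], n.-primitive_root z.
Proof.
pose p : {poly R[i]} := 'X^n - 1; have [r Dp] := closed_field_poly_normal p.
move=> n_gt0; rewrite (monicP _) ?monicXnsubC // scale1r in Dp.
have rn1: all n.-unity_root r by apply/allP=> z; rewrite -root_prod_XsubC -Dp.
have sz_r: (n < (size r).+1)%N.
  by rewrite -(size_prod_XsubC r id) -Dp size_XnsubC.
have [|z] := hasP (has_prim_root n_gt0 rn1 _ sz_r); last by exists z.
by rewrite -separable_prod_XsubC -Dp separable_Xn_sub_1 // pnatr_eq0 -lt0n.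
Qed.

Section Gen.
Variable R : realType.
Local Notation C := (R[i]).

Definition vdag n (v : 'cV[C]_n) : 'rV[C]_n := (map_mx Num.conj v)^T.
Definition proj n (v : 'cV[C]_n) : 'M[C]_n := v *m vdag v.

Lemma conj_mxK m n (A : 'M[C]_(m,n)) : map_mx Num.conj (map_mx Num.conj A) = A.
Proof. by apply/matrixP => i j; rewrite !mxE conjCK. Qed.

Lemma adjmx_proj n (v : 'cV[C]_n) : adjmx (proj v) = proj v.
Proof.
apply/matrixP => i j; rewrite !mxE rmorph_sum; apply: eq_bigr => k _.
by rewrite !mxE rmorphM /= conjCK mulrC.
Qed.

Lemma mx11M (A B : 'M[C]_1) : (A *m B) 0 0 = A 0 0 * B 0 0.
Proof. by rewrite mxE big_ord1. Qed.

Lemma vdag_mul n (u v : 'cV[C]_n) :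
  (vdag u *m v) 0 0 = ((vdag v *m u) 0 0)^*.
Proof.
rewrite !mxE rmorph_sum /=; apply: eq_bigr => k _.
by rewrite !mxE rmorphM /= conjCK mulrC.
Qed.

Lemma mulC_conj_ge0 (c : C) : 0 <= c * c^*.
Proof. by rewrite -normCK exprn_ge0. Qed.

Lemma psd_proj n (v : 'cV[C]_n) : psd (proj v).
Proof.
split; first exact: adjmx_proj.
move=> w; rewrite /proj -/(vdag w) !mulmxA -(mulmxA (vdag w *m v)) mx11M.
by rewrite [X in _ * X]vdag_mul mulC_conj_ge0.
Qed.

Lemma tr_proj_proj n (u v : 'cV[C]_n) :
  \tr (proj u *m proj v) = (vdag v *m u) 0 0 * ((vdag v *m u) 0 0)^*.
Proof.
rewrite /proj mulmxA mxtrace_mulC !mulmxA -(mulmxA (vdag v *m u)) /mxtrace big_ord1 mx11M.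
by rewrite [X in _ * X]vdag_mul.
Qed.

Lemma tr_proj n (u : 'cV[C]_n) : \tr (proj u) = (vdag u *m u) 0 0.
Proof. by rewrite /proj mxtrace_mulC /mxtrace big_ord1. Qed.

Lemma ReD (x y : C) : complex.Re (x + y) = complex.Re x + complex.Re y.
Proof. by case: x; case: y. Qed.
Lemma ReN (x : C) : complex.Re (- x) = - complex.Re x.
Proof. by case: x. Qed.
Lemma ReB (x y : C) : complex.Re (x - y) = complex.Re x - complex.Re y.
Proof. by rewrite ReD ReN. Qed.
Lemma Re_sum (I : finType) (F : I -> C) :
  complex.Re (\sum_(i : I) F i) = \sum_(i : I) complex.Re (F i).
Proof.
apply: (big_morph (fun x : C => complex.Re x)) => //; exact: ReD.
Qed.
Lemma Re_ge0 (x : C) : 0 <= x -> 0 <= complex.Re x.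
Proof. by rewrite lecE => /andP[]. Qed.
Lemma Re_real (r : R) : complex.Re ((r%:C)%C) = r.
Proof. by []. Qed.

Lemma tr_herm_psd n (A M : 'M[C]_n) : adjmx A = A -> psd M ->
  0 <= \tr (A *m M *m A).
Proof.
move=> hA [_ hM]; rewrite /mxtrace; apply: sumr_ge0 => k _.
have -> : (A *m M *m A) k k = (row k A *m M *m col k A) 0 0.
  by rewrite -row_mul !mxE; apply: eq_bigr => j _; rewrite !mxE.
have -> : row k A = (map_mx Num.conj (col k A))^T.
  apply/matrixP => i j; rewrite !mxE.
  by rewrite -{1}hA /adjmx !mxE.
exact: hM.
Qed.

Lemma proj_unit_idem n (v : 'cV[C]_n) : vdag v *m v = 1%:M ->
  proj v *m proj v = proj v.
Proof.
by move=> hv; rewrite /proj mulmxA -(mulmxA v) hv mulmx1.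
Qed.

Lemma adjmx_1B n (P : 'M[C]_n) : adjmx P = P -> adjmx (1%:M - P) = 1%:M - P.
Proof.
move=> hP; apply/matrixP => i j.
rewrite -{2}hP /adjmx !mxE rmorphB /= eq_sym.
by rewrite conjC_nat.
Qed.

Lemma Re_tr_proj_le n (v : 'cV[C]_n) (M : 'M[C]_n) :
  vdag v *m v = 1%:M -> psd M ->
  complex.Re (\tr (proj v *m M)) <= complex.Re (\tr M).
Proof.
move=> hv hM; rewrite -subr_ge0 -ReB; apply: Re_ge0.
set A := 1%:M - proj v.
have hA : adjmx A = A by apply: adjmx_1B; exact: adjmx_proj.
have hAA : A *m A = A.
  rewrite /A mulmxBl !mulmxBr mul1mx mulmx1 proj_unit_idem //.
  by rewrite mul1mx subrr subr0.
have -> : \tr M - \tr (proj v *m M) = \tr (A *m M *m A).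
  rewrite [RHS]mxtrace_mulC [in RHS]mulmxA hAA /A mulmxBl mul1mx.
  by rewrite linearB.
exact: tr_herm_psd.
Qed.

End Gen.

Section Spec.
Variable R : realType.
Local Notation C := (R[i]).
Local Notation rc := (real_complex R).
Variable d : nat.
Hypothesis hd : (0 < d)%N.
Variable w : C.
Hypothesis hw : d.-primitive_root w.

Definition s : R := (Num.sqrt (d%:R : R))^-1.
Definition sC : C := rc s.
Definition K : C := rc ((Num.sqrt (2 + 2 * s))^-1).

Lemma s_ge0 : 0 <= s.
Proof. by rewrite /s invr_ge0 sqrtr_ge0. Qed.

Lemma ssd : sC * sC * d%:R = 1.
Proof.
have -> : (d%:R : C) = rc (d%:R) by rewrite rmorph_nat.
rewrite /sC -!rmorphM /= /s -expr2 exprVn sqr_sqrtr ?ler0n // mulVf ?pnatr_eq0 -?lt0n //.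
Qed.

Lemma KK : K * K * (2 + 2 * sC) = 1.
Proof.
have -> : (2 + 2 * sC : C) = rc (2 + 2 * s) by rewrite /sC rmorphD rmorphM /= !rmorph_nat.
have h : 0 < 2 + 2 * s by rewrite ltr_wpDr ?mulr_ge0 ?s_ge0.
rewrite /K -!rmorphM /= -expr2 exprVn sqr_sqrtr ?ltW // mulVf ?gt_eqF //.
Qed.

Lemma conj_rc (r : R) : (rc r)^* = rc r.
Proof. exact: conjc_real. Qed.

Lemma w_neq0 : w != 0.
Proof. by rewrite (prim_root_eq0 hw) -lt0n. Qed.

Lemma conj_w : w^* = w^-1.
Proof.
have h1 : `|w| = 1.
  apply/eqP; rewrite -(pexpr_eq1 hd) ?normr_ge0 // -normrX prim_expr_order //.
  by rewrite normr1.
have : w * w^* = 1 by rewrite -normCK h1 expr1n.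
move=> h; rewrite -[w^*]mul1r -(mulVf w_neq0) -mulrA h mulr1 //.
Qed.

Lemma conj_wX k : (w ^+ k)^* = (w ^+ k)^-1.
Proof. by rewrite rmorphXn /= conj_w exprVn. Qed.

Lemma sum_roots (k l : 'I_d) :
  \sum_(b < d) (w ^+ k / w ^+ l) ^+ b = (k == l)%:R * d%:R.
Proof.
have hwX m : w ^+ m != 0 by rewrite expf_neq0 // w_neq0.
case: (eqVneq k l) => [->|hkl].
  rewrite divff // mul1r.
  under eq_bigr do rewrite expr1n.
  by rewrite sumr_const card_ord.
rewrite mul0r; set u := w ^+ k / w ^+ l.
have hu1 : u != 1.
  apply/negP => /eqP hu.
  have : w ^+ k == w ^+ l.
    by rewrite -[w ^+ k](divfK (hwX l)) -/u hu mul1r.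
  rewrite (eq_prim_root_expr hw) !modn_small //.
  by move/eqP/val_inj => e; rewrite e eqxx in hkl.
have hud : u ^+ d = 1.
  by rewrite /u exprMn exprVn -!exprM !(mulnC _ d) !exprM (prim_expr_order hw) !expr1n invr1 mulr1.
have := subrX1 u d; rewrite hud subrr => /esym /eqP.
by rewrite mulf_eq0 subr_eq0 (negbTE hu1) /= => /eqP.
Qed.

Definition e (a : 'I_d) : 'cV[C]_d := \col_k ((k == a)%:R).
Definition f (b : 'I_d) : 'cV[C]_d := \col_k (sC * (w ^+ k) ^+ b).
Definition psi (a b : 'I_d) : 'cV[C]_d :=
  \col_k (K * ((k == a)%:R + sC * (w ^+ k / w ^+ a) ^+ b)).

Lemma wX_neq0 m : w ^+ m != 0.
Proof. by rewrite expf_neq0 // w_neq0. Qed.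

Lemma conj_ratio (a l b : nat) : ((w ^+ l / w ^+ a) ^+ b)^* = (w ^+ a / w ^+ l) ^+ b.
Proof. by rewrite rmorphXn rmorphM /= fmorphV /= !conj_wX invrK mulrC. Qed.

Lemma ratio_mul (k a l : nat) : (w ^+ k / w ^+ a) * (w ^+ a / w ^+ l) = w ^+ k / w ^+ l.
Proof. by rewrite mulrA divfK // wX_neq0. Qed.

Lemma sC_conj : sC^* = sC. Proof. exact: conj_rc. Qed.
Lemma K_conj : K^* = K. Proof. exact: conj_rc. Qed.

Lemma psi_entry (a b k l : 'I_d) :
  psi a b k 0 * (psi a b l 0)^* =
  K * K * ((k == a)%:R * (l == a)%:R + (k == a)%:R * (sC * (w ^+ a / w ^+ l) ^+ b)
    + (l == a)%:R * (sC * (w ^+ k / w ^+ a) ^+ b) + sC * sC * (w ^+ k / w ^+ l) ^+ b).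
Proof.
rewrite !mxE rmorphM rmorphD rmorphM /= K_conj sC_conj conj_ratio conjC_nat.
rewrite -(ratio_mul k a l); set X := w ^+ k / w ^+ a; set Y := w ^+ a / w ^+ l.
set A := ((k == a)%:R : C); set B := ((l == a)%:R : C).
rewrite [(X * Y) ^+ b]exprMn. move: A B X Y K sC => A B X Y K1 s1. ring.
Qed.

Lemma sum_delta (F : 'I_d -> C) (c : 'I_d) :
  \sum_(a < d) (c == a)%:R * F a = F c.
Proof.
rewrite (bigD1 c) //= eqxx mul1r big1 ?addr0 // => a hac.
by rewrite eq_sym (negbTE hac) mul0r.
Qed.

Lemma sum_delta' (F : 'I_d -> C) (c : 'I_d) :
  \sum_(a < d) (a == c)%:R * F a = F c.
Proof. by under eq_bigr do rewrite eq_sym; exact: sum_delta. Qed.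

Lemma vdag_entry n (u v : 'cV[C]_n) :
  (vdag u *m v) 0 0 = \sum_(k < n) v k 0 * (u k 0)^*.
Proof. by rewrite mxE; apply: eq_bigr => k _; rewrite !mxE mulrC. Qed.

Lemma mx11_eq (A B : 'M[C]_1) : A 0 0 = B 0 0 -> A = B.
Proof. by move=> h; apply/matrixP => i j; rewrite !ord1. Qed.

Lemma psi_unit (a b : 'I_d) : vdag (psi a b) *m psi a b = 1%:M.
Proof.
apply: mx11_eq; rewrite vdag_entry mxE eqxx /=.
rewrite (eq_bigr _ (fun k _ => psi_entry a b k k)) -mulr_sumr !big_split /=.
rewrite !sum_delta' eqxx divff ?wX_neq0 // expr1n mulr1.
under eq_bigr do rewrite divff ?wX_neq0 // expr1n mulr1.
rewrite sumr_const card_ord -[sC * sC *+ d]mulr_natr ssd /= mulr1n.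
have -> : (1 + sC + sC + 1 : C) = 2 + 2 * sC by ring.
exact: KK.
Qed.

Lemma proj_entry n (v : 'cV[C]_n) k l : proj v k l = v k 0 * (v l 0)^*.
Proof. by rewrite /proj mxE big_ord1 !mxE. Qed.

Lemma frame : \sum_(a < d) \sum_(b < d) proj (psi a b) = d%:R *: 1%:M.
Proof.
apply/matrixP => k l; rewrite summxE.
under eq_bigr do rewrite summxE.
rewrite exchange_big /=.
have inner (b : 'I_d) : \sum_(a < d) proj (psi a b) k l =
   K * K * ((l == k)%:R + sC * (w ^+ k / w ^+ l) ^+ b + sC * (w ^+ k / w ^+ l) ^+ b
     + d%:R * (sC * sC * (w ^+ k / w ^+ l) ^+ b)).
  under eq_bigr do rewrite proj_entry psi_entry.
  rewrite -mulr_sumr !big_split /= !sum_delta sumr_const card_ord mulr_natl.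
  done.
under eq_bigr do rewrite inner.
rewrite -mulr_sumr !big_split /= sumr_const card_ord -!mulr_sumr !sum_roots.
rewrite !mxE eq_sym.
set E := ((k == l)%:R : C).
transitivity (E * d%:R * (K * K * (1 + 2 * sC + sC * sC * d%:R))).
  rewrite -mulr_natr; ring.
rewrite ssd.
have -> : (1 + 2 * sC + 1 : C) = 2 + 2 * sC by ring.
rewrite KK; ring.
Qed.

Lemma fourier : \sum_(z < d) proj (f z) = 1%:M.
Proof.
apply/matrixP => k l; rewrite summxE.
under eq_bigr do rewrite proj_entry !mxE rmorphM rmorphXn /= sC_conj conj_wX.
transitivity (sC * sC * \sum_(z < d) (w ^+ k / w ^+ l) ^+ z).
  rewrite mulr_sumr; apply: eq_bigr => z _.
  rewrite exprMn exprVn; ring.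
rewrite sum_roots !mxE mulrCA ssd; ring.
Qed.

Lemma ebasis : \sum_(z < d) proj (e z) = 1%:M.
Proof.
apply/matrixP => k l; rewrite summxE.
under eq_bigr do rewrite proj_entry !mxE conjC_nat.
by rewrite sum_delta !mxE eq_sym.
Qed.

Lemma ov_e (a b : 'I_d) : (vdag (e a) *m psi a b) 0 0 = K * (1 + sC).
Proof.
rewrite vdag_entry.
under eq_bigr do rewrite [e _ _ _]mxE conjC_nat mulrC.
by rewrite sum_delta' mxE eqxx divff ?wX_neq0 // expr1n mulr1.
Qed.

Lemma ov_f (a b : 'I_d) : (vdag (f b) *m psi a b) 0 0 = K * (1 + sC) / w ^+ (a * b).
Proof.
rewrite vdag_entry.
have pw (k : 'I_d) : psi a b k 0 * (f b k 0)^* =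
    (k == a)%:R * (K * sC * ((w ^+ k)^-1) ^+ b) + K * sC * sC * ((w ^+ a)^-1) ^+ b.
  rewrite !mxE rmorphM rmorphXn /= sC_conj conj_wX.
  have hXY : (w ^+ k / w ^+ a) ^+ b * ((w ^+ k)^-1) ^+ b = ((w ^+ a)^-1) ^+ b.
    by rewrite -exprMn mulrAC divff ?mul1r // wX_neq0.
  rewrite -hXY; set X := (w ^+ k / w ^+ a) ^+ b; set Y := ((w ^+ k)^-1) ^+ b.
  set A := ((k == a)%:R : C); move: A X Y => A X Y; ring.
under eq_bigr do rewrite pw.
rewrite big_split /= sum_delta' sumr_const card_ord -mulr_natr.
have -> : ((w ^+ a)^-1) ^+ b = (w ^+ (a * b))^-1 by rewrite exprVn exprM.
transitivity (K / w ^+ (a * b) * (sC + sC * sC * d%:R)); first ring.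
by rewrite ssd; ring.
Qed.

Lemma half : K * (1 + sC) * (K * (1 + sC))^* = rc ((1 + s) / 2).
Proof.
rewrite rmorphM rmorphD /= K_conj sC_conj conjC1.
have -> : rc ((1 + s) / 2) = (1 + sC) / 2.
  have h2 : rc (2^-1) = 2^-1 by rewrite fmorphV rmorph_nat.
  by rewrite rmorphM rmorphD rmorph1; congr (_ * _); exact: h2.
have h : (2 + 2 * sC) * ((1 + sC) / 2) = (1 + sC) * (1 + sC).
  by move: sC => x; field.
by rewrite mulrACA -h (mulrA (K * K)) KK mul1r.
Qed.

Lemma born_e (a b : 'I_d) : born (proj (psi a b)) (proj (e a)) = (1 + s) / 2.
Proof. by rewrite /born tr_proj_proj ov_e half. Qed.

Lemma born_f (a b : 'I_d) : born (proj (psi a b)) (proj (f b)) = (1 + s) / 2.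
Proof.
rewrite /born tr_proj_proj ov_f.
rewrite rmorphM /= fmorphV /= conj_wX invrK.
rewrite mulrACA mulVf ?wX_neq0 // mulr1.
by rewrite half.
Qed.

Definition rho (x : racX d) : 'M[C]_d := proj (psi (x ord0) (x ord_max)).
Definition Mb (y : 'I_2) (z : 'I_d) : 'M[C]_d :=
  if y == ord0 then proj (e z) else proj (f z).
Definition Mq (x : racX d) : 'M[C]_d := (d%:R)^-1 *: rho x.

Lemma rho_density x : density (rho x).
Proof.
split; first exact: psd_proj.
by rewrite /rho tr_proj psi_unit mxE.
Qed.

Lemma Mb_povm y : povm (Mb y).
Proof.
split; first by move=> z; rewrite /Mb; case: (y == ord0); exact: psd_proj.
rewrite /Mb; case: (y == ord0); [exact: ebasis | exact: fourier].
Qed.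

Lemma sum2 (F : 'I_2 -> R) : \sum_(y < 2) F y = F ord0 + F ord_max.
Proof. by rewrite big_ord_recr big_ord1 /=; congr (F _ + _); exact: val_inj. Qed.

Lemma card_racX : #|racX d| = (d ^ 2)%N.
Proof. by rewrite card_ffun !card_ord. Qed.

Lemma success : rac_success (qprob rho Mb) = Sstar R d.
Proof.
rewrite /rac_success /qprob.
under eq_bigr do rewrite sum2 /rho /Mb eqxx /= born_e born_f.
rewrite sumr_const card_racX /Sstar -/s.
rewrite -mulr_natr natrM.
have hd0 : (d%:R : R) != 0 by rewrite pnatr_eq0 -lt0n.
field; rewrite ?natrX ?expf_neq0 //.
Qed.

Definition mk (p : 'I_d * 'I_d) : racX d :=
  [ffun y : 'I_2 => if y == ord0 then p.1 else p.2].
Definition unmk (x : racX d) : 'I_d * 'I_d := (x ord0, x ord_max).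

Lemma mkK : cancel mk unmk.
Proof. by case=> a b; rewrite /unmk /mk !ffunE. Qed.

Lemma unmkK : cancel unmk mk.
Proof.
move=> x; apply/ffunP => y; rewrite ffunE /unmk /=.
case: y => [[|[|//]]] hy /=.
  by congr (x _); exact: val_inj.
by congr (x _); exact: val_inj.
Qed.

Lemma sum_racX (V : nmodType) (F : racX d -> V) :
  \sum_(x : racX d) F x = \sum_(a < d) \sum_(b < d) F (mk (a, b)).
Proof.
rewrite pair_big /= (reindex mk); last first.
  by apply: onW_bij; exists unmk; [exact: mkK | exact: unmkK].
by apply: eq_bigr => -[a b].
Qed.

Lemma sum_rho : \sum_(x : racX d) rho x = d%:R *: 1%:M.
Proof.
rewrite sum_racX -frame; apply: eq_bigr => a _; apply: eq_bigr => b _.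
by rewrite /rho /mk !ffunE.
Qed.

Lemma rcV (r : R) : rc r^-1 = (rc r)^-1.
Proof. exact: fmorphV. Qed.

Lemma psd_scale n (c : R) (P : 'M[C]_n) : 0 <= c -> psd P -> psd (rc c *: P).
Proof.
move=> hc [hP1 hP2]; split.
  apply/matrixP => i j; rewrite -{2}hP1 /adjmx !mxE rmorphM /= conj_rc //.
move=> v; rewrite -scalemxAr -scalemxAl mxE.
apply: mulr_ge0; last exact: hP2.
by rewrite lecE /= eqxx /= hc.
Qed.

Lemma Re_trMq x : born (rho x) (Mq x) = (d%:R)^-1.
Proof.
rewrite /born /Mq -scalemxAr linearZ /= proj_unit_idem ?psi_unit //.
rewrite tr_proj psi_unit mxE /= mulr1.
have -> : ((d%:R)^-1 : C) = rc ((d%:R)^-1) by rewrite rcV rmorph_nat.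
by [].
Qed.

Lemma DQ_correct : is_DQ rho ((d%:R)^-1).
Proof.
have hd0 : (d%:R : R) != 0 by rewrite pnatr_eq0 -lt0n.
split.
  exists Mq; split.
    split.
      move=> x; rewrite /Mq.
      have -> : ((d%:R)^-1 : C) = rc ((d%:R)^-1) by rewrite rcV rmorph_nat.
      by apply: psd_scale; [rewrite invr_ge0 ler0n | exact: psd_proj].
    rewrite /Mq -scaler_sumr sum_rho scalerA mulVf ?scale1r //.
    by rewrite pnatr_eq0 -lt0n.
  rewrite /DQ_val; under eq_bigr do rewrite Re_trMq.
  rewrite sumr_const card_racX -mulr_natr natrX.
  by field.
move=> M [hM hsum]; rewrite /DQ_val card_racX natrX.
apply: (@le_trans _ _ ((d%:R ^+ 2)^-1 * \sum_(x : racX d) complex.Re (\tr (M x)))).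
  rewrite ler_wpM2l ?invr_ge0 ?exprn_ge0 ?ler0n //.
  apply: ler_sum => x _; apply: Re_tr_proj_le => //; exact: psi_unit.
rewrite -Re_sum -raddf_sum hsum.
have ht : \tr (1%:M : 'M[C]_d) = rc d%:R by rewrite mxtrace1 rmorph_nat.
rewrite (_ : complex.Re _ = d%:R); last exact: (congr1 (fun z : C => complex.Re z) ht).
rewrite le_eqVlt; apply/orP; left; apply/eqP.
by field.
Qed.

End Spec.

Section Classical.
Variable R : realType.
Variable d : nat.

Lemma sum_pick (F : racX d -> R) c : \sum_x F x * (x == c)%:R = F c.
Proof.
rewrite (bigD1 c) //= eqxx mulr1 big1 ?addr0 // => x /negbTE ->.
by rewrite mulr0.
Qed.

Lemma sum_deltaR (F : 'I_d -> R) c : \sum_(i < d) F i * (c == i)%:R = F c.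
Proof.
rewrite (bigD1 c) //= eqxx mulr1 big1 ?addr0 // => x hx.
by rewrite eq_sym (negbTE hx) mulr0.
Qed.

Lemma cbound (x : racX d) (i j : 'I_d) :
  (x ord0 == i)%:R + (x ord_max == j)%:R <= 1 + (x == mk (i, j)) %:R :> R.
Proof.
case: (eqVneq (x ord0) i) => h0; case: (eqVneq (x ord_max) j) => h1 /=.
- have -> : x == mk (i, j).
    by rewrite -(unmkK x) /unmk h0 h1.
  by [].
- by rewrite addr0 lerDl ler0n.
- by rewrite add0r lerDl ler0n.
- by rewrite addr0 addr_ge0 ?ler0n.
Qed.

Lemma per_m (wt : racX d -> R) (a b : 'I_d -> R) :
  (forall x, 0 <= wt x) -> (forall i, 0 <= a i) -> (forall j, 0 <= b j) ->
  \sum_i a i = 1 -> \sum_j b j = 1 ->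
  \sum_x wt x * (a (x ord0) + b (x ord_max)) <=
  \sum_x wt x + \big[Num.max/0]_x wt x.
Proof.
move=> hw ha hb sa sb.
set T := \sum_x wt x; set W := \big[Num.max/0]_x wt x.
have claim (x : racX d) : a (x ord0) + b (x ord_max) =
   \sum_i \sum_j a i * b j * ((x ord0 == i)%:R + (x ord_max == j)%:R).
  transitivity (\sum_i (a i * (x ord0 == i)%:R * \sum_j b j
                    + a i * \sum_j b j * (x ord_max == j)%:R)).
    by rewrite big_split /= -!mulr_suml sum_deltaR sb mulr1 sa mul1r sum_deltaR.
  apply: eq_bigr => i _; rewrite !mulr_sumr -big_split /=.
  by apply: eq_bigr => j _; ring.
under eq_bigr do rewrite claim mulr_sumr.
rewrite exchange_big /=.
apply: (@le_trans _ _ (\sum_i \sum_j a i * b j * (T + W))).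
  apply: ler_sum => i _.
  under eq_bigr do rewrite mulr_sumr.
  rewrite exchange_big /=; apply: ler_sum => j _.
  under eq_bigr do rewrite mulrCA.
  rewrite -mulr_sumr ler_wpM2l ?mulr_ge0 //.
  apply: (@le_trans _ _ (\sum_x wt x * (1 + (x == mk (i, j))%:R))).
    by apply: ler_sum => x _; rewrite ler_wpM2l // cbound.
  under eq_bigr do rewrite mulrDr mulr1.
  rewrite big_split /= sum_pick lerD2l.
  exact: le_bigmax.
rewrite le_eqVlt; apply/orP; left; apply/eqP.
under eq_bigr do under eq_bigr do rewrite mulrAC.
under eq_bigr do rewrite -mulr_sumr sb mulr1.
by rewrite -mulr_suml sa mul1r.
Qed.


Lemma classical_bound (hd : (0 < d)%N) (Msg : finType) (pe : racX d -> Msg -> R)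
  (pd : 'I_2 -> Msg -> 'I_d -> R) :
  stochastic pe -> (forall y, stochastic (pd y)) ->
  rac_success (cprob pe pd) <= (1 + DC pe) / 2.
Proof.
move=> [pe0 pe1] hpd.
rewrite /rac_success /cprob /DC.
under eq_bigr do rewrite sum2 -big_split /=.
under eq_bigr do under eq_bigr do rewrite -mulrDr.
rewrite exchange_big /=.
set W := \sum_m \big[Num.max/0]_x pe x m.
apply: (@le_trans _ _ (((2 * d ^ 2)%N%:R)^-1 *
          (\sum_m (\sum_x pe x m + \big[Num.max/0]_x pe x m)))).
  rewrite ler_wpM2l ?invr_ge0 ?ler0n //.
  apply: ler_sum => m _; apply: per_m => //.
  - by move=> i; case: (hpd ord0) => h _; exact: h.
  - by move=> i; case: (hpd ord_max) => h _; exact: h.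
  - by case: (hpd ord0) => _ h; exact: h.
  - by case: (hpd ord_max) => _ h; exact: h.
rewrite big_split /= -/W exchange_big /=.
under eq_bigr do rewrite pe1.
rewrite sumr_const card_racX natrM natrX.
have hd0 : (d%:R : R) != 0 by rewrite pnatr_eq0 -lt0n.
rewrite le_eqVlt; apply/orP; left; apply/eqP.
by field.
Qed.

End Classical.

Theorem theorem2 (R : realType) (d : nat) (hd : (2 <= d)%N) :
  exists (n : nat) (rho : racX d -> 'M[R[i]]_n) (M : 'I_2 -> 'I_d -> 'M[R[i]]_n)
         (DQ : R),
    (forall x, density (rho x)) /\ (forall y, povm (M y)) /\
    rac_success (qprob rho M) = Sstar R d /\
    is_DQ rho DQ /\ DQ <= (d%:R)^-1 /\
    forall (Msg : finType) (pe : racX d -> Msg -> R) (pd : 'I_2 -> Msg -> 'I_d -> R),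
      stochastic pe -> (forall y, stochastic (pd y)) ->
      Sstar R d <= rac_success (cprob pe pd) ->
      Num.sqrt (d%:R : R) <= DC pe / DQ /\ (Num.sqrt (d%:R : R))^-1 <= DC pe.
Proof.
have hd0 : (0 < d)%N by apply: leq_trans hd.
have [w hw] := prim_ex R hd0.
exists d, (@rho R d w), (@Mb R d w), ((d%:R)^-1).
split; first by move=> x; exact: (rho_density hd0 hw).
split; first by move=> y; exact: (Mb_povm hd0 hw).
split; first exact: (success hd0 hw).
split; first exact: (DQ_correct hd0 hw).
split; first exact: lexx.
move=> Msg pe pd hpe hpd hS.
have hb := classical_bound hd0 hpe hpd.
have hDC : (Num.sqrt (d%:R : R))^-1 <= DC pe.
  move: hS; rewrite /Sstar => hS; lra.
split => //.
have hsq : 0 < Num.sqrt (d%:R : R) by rewrite sqrtr_gt0 ltr0n.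
rewrite invrK.
have -> : Num.sqrt (d%:R : R) = (Num.sqrt (d%:R : R))^-1 * d%:R.
  have e := sqr_sqrtr (ler0n R d); move: e hsq.
  set q := Num.sqrt _ => e hsq; rewrite -e.
  by field; rewrite gt_eqF.
by rewrite ler_wpM2r ?ler0n.
Qed.
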